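(* Let $V$ be a finite set with positive element weights ($\vert A \vert$ = total weight of $A \subseteq V$), and let $\mathcal{P}, \mathcal{P}'$ be partitions of $V$ into nonempty parts with $\vert \mathcal{P}' \vert \ge 2$. Define $\phi^* : 2^{\mathcal{P}} \to \mathbb{R}_{\ge 0}$ by $\phi^*(\mathcal{S}) = 0$ if $\mathcal{S} \in \{\emptyset, \mathcal{P}\}$ and $\phi^*(\mathcal{S}) = \min_{\emptyset \ne \mathcal{S}' \subsetneq \mathcal{P}'} \vert U_{\mathcal{S}} \triangle U_{\mathcal{S}'} \vert$ otherwise. Then $\phi^*$ is symmetric, i.e. $\phi^*(\mathcal{S}) = \phi^*(\mathcal{P} \setminus \mathcal{S})$ for all $\mathcal{S} \subseteq \mathcal{P}$; and $\phi^*$ is not submodular in general, i.e. there exist $V$, $\mathcal{P}$, $\mathcal{P}'$ and $\mathcal{S}, \mathcal{T} \subseteq \mathcal{P}$ with $\phi^*(\mathcal{S} \cup \mathcal{T}) > \phi^*(\mathcal{S}) + \phi^*(\mathcal{T}) - \phi^*(\mathcal{S} \cap \mathcal{T})$.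
   Context: $U_{\mathcal{S}}$ denotes the union of the sets in $\mathcal{S}$; $\triangle$ is symmetric difference. *)

(* Defs.v *)
From mathcomp Require Import all_boot all_order all_algebra.
Set Implicit Arguments. Unset Strict Implicit. Unset Printing Implicit Defensive.
Import Order.TTheory GRing.Theory Num.Theory.
Local Open Scope ring_scope.

Section Defs.
Variables (R : realFieldType) (V : finType) (w : V -> R).

Definition wt (A : {set V}) : R := \sum_(x in A) w x.

Definition symdiff (A B : {set V}) : {set V} := (A :\: B) :|: (B :\: A).

(* The minimum is taken as a finite bigop of
   Num.min with initial value wt [set: V]; since every symmetric difference
   has weight ≤ wt [set: V] (w ≥ 0) and the index range is nonempty when
   #|P'| ≥ 2, this is exactly the minimum. *)
Definition phistar (P P' S : {set {set V}}) : R :=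
  if (S == set0) || (S == P) then 0
  else \big[Num.min/wt [set: V]]_(S' in powerset P' | (S' != set0) && (S' != P'))
         wt (symdiff (cover S) (cover S')).
End Defs.

(* Main.v *)
Require Import Defs.
From mathcomp Require Import all_boot all_order all_algebra.
From mathcomp Require Import lra.
Set Implicit Arguments. Unset Strict Implicit. Unset Printing Implicit Defensive.
Import Order.TTheory GRing.Theory Num.Theory.
Local Open Scope ring_scope.

Lemma cover_compl (V : finType) (P S : {set {set V}}) :
  partition P [set: V] -> S \subset P -> cover (P :\: S) = ~: cover S.
Proof.
move=> /and3P[/eqP covP tI _] sSP; apply/setP=> x; rewrite inE.
apply/idP/idP.
- case/bigcupP => B /setDP[BP BnS] xB; apply/bigcupP => -[C CS xC].
  have e1 := def_pblock tI BP xB.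
  have e2 := def_pblock tI (subsetP sSP C CS) xC.
  by move: BnS; rewrite -e1 e2 CS.
- move=> nx; have : x \in cover P by rewrite covP inE.
  case/bigcupP => B BP xB; apply/bigcupP; exists B => //.
  rewrite inE BP andbT; apply: contra nx => BS; apply/bigcupP; by exists B.
Qed.

Lemma symdiffC (V : finType) (A B : {set V}) :
  symdiff (~: A) B = symdiff A (~: B).
Proof.
apply/setP=> x; rewrite !inE.
by case: (x \in A); case: (x \in B).
Qed.

Definition hflip (V : finType) (P' X : {set {set V}}) := (P' :\: X) :|: (X :\: P').

Lemma hflipK (V : finType) (P' : {set {set V}}) : involutive (hflip P').
Proof.
move=> X; apply/setP=> x; rewrite !inE.
by case: (x \in P'); case: (x \in X).
Qed.

Lemma hflip_pred (V : finType) (P' X : {set {set V}}) :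
  (hflip P' X \in powerset P') && ((hflip P' X != set0) && (hflip P' X != P'))
  = (X \in powerset P') && ((X != set0) && (X != P')).
Proof.
rewrite !powersetE.
case: (boolP (X \subset P')) => sXP; last first.
  have -> : (hflip P' X \subset P') = false.
    apply/negbTE; apply: contra sXP => /subsetP sh.
    apply/subsetP => x xX; have := sh x; rewrite !inE xX andbT.
    by case: (x \in P') => //= ->.
  by [].
have -> : hflip P' X = P' :\: X.
  by rewrite /hflip (_ : X :\: P' = set0) ?setU0 //; apply/eqP; rewrite setD_eq0.
rewrite subsetDl /= [RHS]andbC; congr (~~ _ && ~~ _).
- by rewrite setD_eq0 eqEsubset sXP.
- apply/eqP/eqP => [e|->]; last by rewrite setD0.
  apply/setP => x; rewrite inE; apply/negbTE/negP => xX.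
  have : x \in P' :\: X by rewrite e (subsetP sXP).
  by rewrite inE xX.
Qed.

Lemma part1 (R : realFieldType) :
  (forall (V : finType) (w : V -> R), (forall x, 0 < w x) ->
     forall P P' : {set {set V}},
       partition P [set: V] -> partition P' [set: V] -> (2 <= #|P'|)%N ->
       forall S : {set {set V}}, S \subset P ->
         phistar w P P' S = phistar w P P' (P :\: S)).
Proof.
move=> V w _ P P' hP hP' _ S sSP; rewrite /phistar.
case: (eqVneq S set0) => [->|S0]; first by rewrite setD0 eqxx orbT.
case: (eqVneq S P) => [->|SP]; first by rewrite setDv eqxx.
have -> : (P :\: S == set0) = false.
  apply/negbTE; rewrite setD_eq0; apply: contra SP => sPS.
  by rewrite eqEsubset sSP.
have -> : (P :\: S == P) = false.
  apply/negbTE; apply: contra S0 => /eqP e.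
  rewrite -subset0; apply/subsetP => x xS.
  have : x \in P :\: S by rewrite e (subsetP sSP).
  by rewrite inE xS.
rewrite /= cover_compl //.
rewrite [RHS](reindex_inj (inv_inj (hflipK P'))) /=.
apply: eq_big => X; first exact: esym (hflip_pred P' X).
rewrite powersetE => /andP[sXP _].
have -> : hflip P' X = P' :\: X.
  by rewrite /hflip (_ : X :\: P' = set0) ?setU0 //; apply/eqP; rewrite setD_eq0.
by rewrite cover_compl // symdiffC setCK.
Qed.
Definition oa : 'I_3 := @Ordinal 3 0 isT.
Definition ob : 'I_3 := @Ordinal 3 1 isT.
Definition oc : 'I_3 := @Ordinal 3 2 isT.
Definition w3 (R : realFieldType) (x : 'I_3) : R := if x == oc then 2 else 1.

Lemma wt3 (R : realFieldType) (E : {set 'I_3}) :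
  wt (@w3 R) E = (if oa \in E then 1 else 0) + (if ob \in E then 1 else 0)
                 + (if oc \in E then 2 else 0).
Proof.
rewrite /wt big_mkcond /= !big_ord_recl big_ord0 addr0 addrA.
have e1 : ord0 = oa by apply/val_inj.
have e2 : lift ord0 ord0 = ob by apply/val_inj.
have e3 : lift ord0 (lift ord0 ord0) = oc by apply/val_inj.
rewrite e3 e2 e1 /w3.
by case: (oa \in E); case: (ob \in E); case: (oc \in E).
Qed.

Lemma cover_set2 (T : finType) (X Y : {set T}) : cover [set X; Y] = X :|: Y.
Proof. by rewrite /cover bigcup_setU !big_set1. Qed.

Lemma part_singletons (T : finType) : partition [set [set x] | x : T] [set: T].
Proof.
apply/and3P; split.
- apply/eqP/setP => x; rewrite inE; apply/bigcupP; exists [set x].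
    by apply/imsetP; exists x.
  by rewrite inE.
- apply/trivIsetP => A B /imsetP[x _ ->] /imsetP[y _ ->] ne.
  rewrite disjoints1 inE; apply: contra ne => /eqP->; by [].
- apply/imsetP => -[x _ e]; have : x \in (set0 : {set T}) by rewrite e inE.
  by rewrite inE.
Qed.

Lemma part2 (T : finType) (A : {set T}) :
  A != set0 -> A != setT -> partition [set A; ~: A] setT.
Proof.
move=> A0 AT; apply/and3P; split.
- apply/eqP/setP => x; rewrite inE; apply/bigcupP.
  case: (boolP (x \in A)) => h; [exists A | exists (~: A)];
    by rewrite ?inE ?eqxx ?orbT.
- apply/trivIsetP => X Y; rewrite !inE => /orP[]/eqP-> /orP[]/eqP-> //;
    rewrite ?eqxx // => _; by rewrite disjoints_subset ?setCK.
- rewrite !inE negb_or eq_sym A0 /=; apply: contra AT => /eqP e.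
  apply/eqP; rewrite -[A]setCK; first [rewrite -e | rewrite e]; by rewrite setC0.
Qed.

Lemma sub2 (T : finType) (X : {set T}) a b :
  X \subset [set a; b] -> X != set0 -> X != [set a; b] -> X = [set a] \/ X = [set b].
Proof.
move=> sX /set0Pn[y yX] nX.
have Xab : forall z, z \in X -> z = a \/ z = b.
  by move=> z /(subsetP sX); rewrite !inE => /orP[]/eqP->; [left|right].
have full : a \in X -> b \in X -> False.
  move=> aX bX; move/negP: nX; apply; rewrite eqEsubset sX /=.
  by apply/subsetP => u; rewrite !inE => /orP[]/eqP->.
case: (Xab y yX) => ey; subst y; [left|right]; apply/setP => z; rewrite inE;
  apply/idP/eqP => [zX|->] //; case: (Xab z zX) => // ez; subst z; exfalso; exact: full.
Qed.

Lemma phi_le (R : realFieldType) (V : finType) (w : V -> R) (P P' S S' : {set {set V}}) :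
  S != set0 -> S != P -> S' \subset P' -> S' != set0 -> S' != P' ->
  phistar w P P' S <= wt w (symdiff (cover S) (cover S')).
Proof.
rewrite /phistar => /negbTE-> /negbTE-> /= h1 h2 h3.
by apply: bigmin_le_cond; rewrite powersetE h1 h2 h3.
Qed.

Lemma phi_ge (R : realFieldType) (V : finType) (w : V -> R) (P P' S : {set {set V}}) (c : R) :
  S != set0 -> S != P -> c <= wt w [set: V] ->
  (forall S' : {set {set V}}, S' \subset P' -> S' != set0 -> S' != P' ->
      c <= wt w (symdiff (cover S) (cover S'))) ->
  c <= phistar w P P' S.
Proof.
rewrite /phistar => /negbTE-> /negbTE-> /= hc h.
apply: le_bigmin => // X; rewrite powersetE => /and3P[h1 h2 h3]; exact: h.
Qed.

Lemma s1neq (x y : 'I_3) : x != y -> ([set x] == [set y]) = false.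
Proof. by rewrite (inj_eq set1_inj) => /negbTE. Qed.

Lemma part2main (R : realFieldType) :
  (exists (V : finType) (w : V -> R) (P P' S T : {set {set V}}),
     [/\ (forall x, 0 < w x), partition P [set: V], partition P' [set: V],
         (2 <= #|P'|)%N & [/\ S \subset P, T \subset P &
         phistar w P P' (S :|: T) >
           phistar w P P' S + phistar w P P' T - phistar w P P' (S :&: T)]]).
Proof.
pose P := [set [set x] | x : 'I_3].
pose A := [set oa].
pose P' := [set A; ~: A].
have inP : forall x, [set x] \in P by move=> x; apply/imsetP; exists x.
have A0 : A != set0 by apply/set0Pn; exists oa; rewrite inE.
have AT : A != setT by apply/negP => /eqP e; have := in_setT ob; rewrite -e inE.
have AnC : A != ~: A.
  apply/negP => /eqP e; have : oa \in ~: A by rewrite -e inE.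
  by rewrite !inE eqxx.
exists 'I_3, (@w3 R), P, P', [set [set oc]], [set [set oa]]; split.
- by move=> x; rewrite /w3; case: ifP => _; lra.
- exact: part_singletons.
- exact: part2.
- by rewrite cards2 AnC.
- split; [by rewrite sub1set | by rewrite sub1set |].
  have h1 : phistar (@w3 R) P P' [set [set oc]] <= 1.
    apply: le_trans; first apply: (@phi_le R _ (@w3 R) P P' _ [set ~: A]).
    + by apply/set0Pn; exists [set oc]; rewrite inE.
    + apply/negP => /eqP e; have := inP ob; rewrite -e inE s1neq //.
    + by rewrite sub1set !inE eqxx orbT.
    + by apply/set0Pn; exists (~: A); rewrite inE.
    + apply/negP => /eqP e; have : A \in [set ~: A] by rewrite e !inE eqxx.
      by rewrite inE (negbTE AnC).
    + by rewrite !cover1 wt3 !inE /=; lra.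
  have h2 : phistar (@w3 R) P P' [set [set oa]] <= 0.
    apply: le_trans; first apply: (@phi_le R _ (@w3 R) P P' _ [set A]).
    + by apply/set0Pn; exists [set oa]; rewrite inE.
    + apply/negP => /eqP e; have := inP ob; rewrite -e inE s1neq //.
    + by rewrite sub1set !inE eqxx.
    + by apply/set0Pn; exists A; rewrite inE.
    + apply/negP => /eqP e; have : ~: A \in [set A] by rewrite e !inE eqxx orbT.
      by rewrite inE eq_sym (negbTE AnC).
    + by rewrite !cover1 wt3 !inE /=; lra.
  have h3 : phistar (@w3 R) P P' ([set [set oc]] :&: [set [set oa]]) = 0.
    rewrite /phistar (_ : _ :&: _ = set0) ?eqxx //.
    apply/setP => X; rewrite !inE; apply/negP => /andP[/eqP-> ].
    by rewrite s1neq.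
  have h4 : 2 <= phistar (@w3 R) P P' ([set [set oc]] :|: [set [set oa]]).
    apply: phi_ge.
    + by apply/set0Pn; exists [set oc]; rewrite !inE eqxx.
    + apply/negP => /eqP e; have := inP ob; rewrite -e !inE !s1neq //.
    + by rewrite wt3 !inE /=; lra.
    + move=> S' sS' n0 nP; case: (sub2 sS' n0 nP) => ->;
        by rewrite cover1 -/(cover [set _; _]) cover_set2 wt3 !inE /=; lra.
  lra.
Qed.

Theorem proposition8 (R : realFieldType) :
  (forall (V : finType) (w : V -> R), (forall x, 0 < w x) ->
     forall P P' : {set {set V}},
       partition P [set: V] -> partition P' [set: V] -> (2 <= #|P'|)%N ->
       forall S : {set {set V}}, S \subset P ->
         phistar w P P' S = phistar w P P' (P :\: S))
  /\
  (exists (V : finType) (w : V -> R) (P P' S T : {set {set V}}),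
     [/\ (forall x, 0 < w x), partition P [set: V], partition P' [set: V],
         (2 <= #|P'|)%N & [/\ S \subset P, T \subset P &
         phistar w P P' (S :|: T) >
           phistar w P P' S + phistar w P P' T - phistar w P P' (S :&: T)]]).
Proof. split; [exact: part1 | exact: part2main]. Qed.
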